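(* For $n\ge 3$, let $P'_n$ be the graph on vertices $v_1,\dots,v_{n+1}$ whose edges are $\{v_i,v_{i+1}\}$ for $1\le i\le n-1$ together with $\{v_{n-1},v_{n+1}\}$ (a path on $n$ vertices with a pendant vertex attached to its second-to-last vertex). Then: (a) if $n\ge 3$ and $n\equiv 0 \pmod 3$, then $\mathrm{mur}(P'_n)=n-2$; (b) if $n\ge 6$ and $n+1=4k$ for some integer $k$, then $\mathrm{mur}(P'_n)=n-2$.
   Context: For a finite simple undirected graph $G$ on vertices $v_1,\dots,v_n$, let $A_G$ be its $(0,1)$-adjacency matrix, $D_G=\mathrm{diag}(d_1,\dots,d_n)$ with $d_i$ the degree of $v_i$, $I$ the $n\times n$ identity matrix and $J$ the $n\times n$ all-ones matrix. A universal adjacency matrix of $G$ is any matrix $\alpha A_G+\beta I+\gamma J+\delta D_G$ with real scalars $\alpha,\beta,\gamma,\delta$ and $\alpha\neq 0$. The minimum universal rank $\mathrm{mur}(G)$ is the minimum rank over all universal adjacency matrices of $G$. *)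

(* Defs.v *)
From HB Require Import structures.
From mathcomp Require Import all_boot all_order all_algebra.
From mathcomp Require Import reals.
Set Implicit Arguments. Unset Strict Implicit. Unset Printing Implicit Defensive.
Import Order.TTheory GRing.Theory Num.Theory.
Local Open Scope ring_scope.

Definition simple_graph (m : nat) (e : rel 'I_m) : Prop :=
  (forall i j, e i j = e j i) /\ (forall i, ~~ e i i).

Section Universal.
Variables (R : realType) (m : nat) (e : rel 'I_m).

Definition adj_mx : 'M[R]_m := \matrix_(i, j) (e i j)%:R.
Definition deg_mx : 'M[R]_m := diag_mx (\row_i (#|[pred j | e i j]|)%:R).
Definition J_mx : 'M[R]_m := const_mx 1.

Definition univ_adj_mx (a b c d : R) : 'M[R]_m :=
  a *: adj_mx + b *: 1%:M + c *: J_mx + d *: deg_mx.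

Definition is_mur (r : nat) : Prop :=
  (exists a b c d : R, a != 0 /\ \rank (univ_adj_mx a b c d) = r) /\
  (forall a b c d : R, a != 0 -> (r <= \rank (univ_adj_mx a b c d))%N).
End Universal.

(* P'_n on vertices v_1..v_{n+1}, encoded as 'I_(n+1) with v_k <-> k-1.
   Edges v_i v_{i+1} (1 <= i <= n-1) and v_{n-1} v_{n+1}. *)
Definition Pprime_rel (n : nat) : rel 'I_(n.+1) :=
  fun i j =>
    [|| ((i.+1 == j) && (j <= n.-1)%N),
        ((j.+1 == i) && (i <= n.-1)%N),
        ((i == (n - 2)%N :> nat) && (j == n :> nat)) |
        ((j == (n - 2)%N :> nat) && (i == n :> nat))].

(* Main.v *)
Require Import Defs.
From HB Require Import structures.
From mathcomp Require Import all_boot all_order all_algebra.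
From mathcomp Require Import reals.
From mathcomp Require Import ring.
From Stdlib Require Import Lia.
Set Implicit Arguments. Unset Strict Implicit. Unset Printing Implicit Defensive.
Import Order.TTheory GRing.Theory Num.Theory.

Definition eb n (k j : nat) := [|| ((k.+1 == j) && (j <= n.-1)%N), ((j.+1 == k) && (k <= n.-1)%N),
   ((k == (n - 2)%N) && (j == n)) | ((j == (n - 2)%N) && (k == n))].

Ltac benum := rewrite -?subn1 /subn /=;
  repeat (case: eqP => ?); repeat (case: ssrnat.leP => ?); simpl; (done || lia).

Lemma e_0 n k : (3 <= n)%N -> (eb n k 0 : nat) = (k == 1)%N.
Proof. move=> /ssrnat.leP hn; rewrite /eb. benum. Qed.
Lemma e_int n k j : (3 <= n)%N -> (1 <= j)%N -> (j + 3 <= n)%N ->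
   (eb n k j : nat) = ((k == j.-1) : nat) + (k == j.+1).
Proof. move=> /ssrnat.leP hn /ssrnat.leP h1 /ssrnat.leP h2; rewrite /eb. move: h2; rewrite -plusE => h2. benum. Qed.
Lemma e_m2 n k : (3 <= n)%N ->
   (eb n k (n-2) : nat) = ((k == n-3) : nat) + (k == n.-1) + (k == n).
Proof. move=> /ssrnat.leP hn; rewrite /eb. benum. Qed.
Lemma e_m1 n k : (3 <= n)%N -> (eb n k n.-1 : nat) = (k == n - 2)%N.
Proof. move=> /ssrnat.leP hn; rewrite /eb. benum. Qed.
Lemma e_n n k : (3 <= n)%N -> (eb n k n : nat) = (k == n - 2)%N.
Proof. move=> /ssrnat.leP hn; rewrite /eb. benum. Qed.

Local Open Scope ring_scope.

Lemma e_sym n (k j : 'I_n.+1) : @Pprime_rel n k j = @Pprime_rel n j k.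
Proof.
rewrite /Pprime_rel; apply/idP/idP => /or4P [] ->; rewrite ?orbT //.
Qed.

Lemma deg_sum (R : pzRingType) n (j : 'I_n.+1) :
  (#|[pred k | @Pprime_rel n j k]|)%:R = \sum_(k < n.+1) (@Pprime_rel n k j)%:R * (1 : R).
Proof.
rewrite -sum1_card natr_sum big_mkcond /=; apply: eq_bigr => k _.
rewrite inE e_sym mulr1; by case: (Pprime_rel _ _).
Qed.

Lemma row_univ (R : realType) n (F : nat -> R) a b c d (j : 'I_n.+1) :
  \sum_(k < n.+1) F k * (@univ_adj_mx R n.+1 (@Pprime_rel n) a b c d) k j =
  a * \sum_(k < n.+1) (@Pprime_rel n k j)%:R * F k
  + (b + d * \sum_(k < n.+1) (@Pprime_rel n k j)%:R * 1) * F j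
  + c * \sum_(k < n.+1) F k.
Proof.
rewrite -deg_sum.
under eq_bigr => k _ do rewrite !mxE !mulrDr.
rewrite !big_split /= mulr_sumr mulr_sumr.
have -> : \sum_(i < n.+1) F i * (b * (i == j)%:R) = F j * b.
  rewrite (bigD1 j) //= eqxx big1 ?addr0 ?mulr1 // => i /negbTE ->; by rewrite !mulr0.
have -> : \sum_(i < n.+1) F i * (d * (#|[pred j0 | Pprime_rel i j0]|%:R *+ (i == j))) = F j * (d * #|[pred k | Pprime_rel j k]|%:R).
  rewrite (bigD1 j) //= eqxx big1 ?addr0 ?mulr1n // => i /negbTE ->; by rewrite mulr0n !mulr0.
have -> : \sum_(i < n.+1) F i * (a * (Pprime_rel i j)%:R) = \sum_(i < n.+1) a * ((Pprime_rel i j)%:R * F i).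
  by apply: eq_bigr => i _; rewrite mulrCA (mulrC (F i)).
rewrite -!mulr_sumr.
under eq_bigr => i _ do rewrite mulr1 mulrC.
rewrite -mulr_sumr. ring.
Qed.

Lemma rank_le3 (R : fieldType) N (M : 'M[R]_N) (F1 F2 F3 : nat -> R) (a1 a2 a3 : 'I_N) :
  (forall j, \sum_(k < N) F1 k * M k j = 0) ->
  (forall j, \sum_(k < N) F2 k * M k j = 0) ->
  (forall j, \sum_(k < N) F3 k * M k j = 0) ->
  F1 a1 != 0 -> F2 a2 != 0 -> F3 a3 != 0 ->
  F1 a2 = 0 -> F1 a3 = 0 -> F2 a3 = 0 ->
  (\rank M <= N - 3)%N.
Proof.
move=> h1 h2 h3 n1 n2 n3 z12 z13 z23.
pose Fs := [:: F1; F2; F3]. pose As := [:: a1; a2; a3].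
pose V : 'M[R]_(3, N) := \matrix_(i < 3, k < N) (nth F1 Fs i) k.
pose S : 'M[R]_(N, 3) := \matrix_(k < N, j < 3) (k == nth a1 As j)%:R.
have hW : forall i j, (V *m S) i j = nth F1 Fs i (nth a1 As j).
  move=> i j; rewrite !mxE (bigD1 (nth a1 As j)) //= !mxE eqxx mulr1 big1 ?addr0 //.
  by move=> k /negbTE hk; rewrite !mxE hk mulr0.
have hWu : V *m S \in unitmx.
  rewrite unitmxE unitfE det_trig.
    rewrite prodf_seq_neq0; apply/allP => i _ /=; rewrite hW.
    by case: i => [[|[|[|]]] hi] //=.
  apply/is_trig_mxP => i j; rewrite hW.
  by case: i => [[|[|[|]]] hi]; case: j => [[|[|[|]]] hj] //=.
have r3 : \rank (V *m S) = 3%N by rewrite mxrank_unit.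
have rV : (3 <= \rank V)%N by rewrite -{1}r3 mxrankM_maxl.
have VM : V *m M = 0.
  apply/matrixP => i j; rewrite !mxE.
  case: i => [[|[|[|]]] hi] //=.
  - by rewrite -[RHS](h1 j); apply: eq_bigr => k _; rewrite mxE.
  - by rewrite -[RHS](h2 j); apply: eq_bigr => k _; rewrite mxE.
  - by rewrite -[RHS](h3 j); apply: eq_bigr => k _; rewrite mxE.
have : (3 <= N - \rank M)%N.
  rewrite -mxrank_ker (leq_trans rV) // mxrankS // sub_kermx VM.
  by [].
have := rank_leq_row M.
move: (\rank M) => r /ssrnat.leP h /ssrnat.leP h'; apply/ssrnat.leP.
rewrite /subn /= in h' *; lia.
Qed.

Lemma rankJ (R : realType) m (x : R) : (\rank (x *: @J_mx R m) <= 1)%N.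
Proof.
have -> : x *: @J_mx R m = (x *: (const_mx 1 : 'M[R]_(m, 1))) *m (const_mx 1 : 'M[R]_(1, m)).
  apply/matrixP => i j; rewrite !mxE big_ord1 !mxE; ring.
exact: leq_trans (mxrankM_maxr _ _) (rank_leq_row _).
Qed.

Lemma rank_colsub (R : fieldType) m n p (g : 'I_p -> 'I_n) (A : 'M[R]_(m, n)) :
  (\rank (colsub g A) <= \rank A)%N.
Proof.
have -> : colsub g A = (rowsub g A^T)^T by apply/matrixP => i j; rewrite !mxE.
by rewrite mxrank_tr -[X in (_ <= X)%N]mxrank_tr mxrankS // rowsub_sub.
Qed.

Lemma arith n t m0 u : (3 <= n)%N -> t = n.-1 -> (t <= m0)%N -> (m0 <= u + 1)%N -> (n - 2 <= u)%N.
Proof.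
move=> /ssrnat.leP h0 -> /ssrnat.leP h1 /ssrnat.leP h2; apply/ssrnat.leP.
rewrite /subn /addn /= in h1 h2 *; lia.
Qed.

Lemma Tbool (n x y : nat) : (3 <= n)%N -> (x <= y)%N -> (x < n.-1)%N -> (y < n.-1)%N ->
  [|| (x.+1 == y.+1) && (y < n.-1)%N, (y.+2 == x) && (x <= n.-1)%N,
      (x == (n - 2)%N) && (y.+1 == n) | (y.+1 == (n - 2)%N) && (x == n)] = (x == y).
Proof.
move=> h0' h1' h2' h3'.
move: (h0') (h1') (h2') (h3') => /ssrnat.leP h0 /ssrnat.leP h1 /ssrnat.leP h2 /ssrnat.leP h3.
apply/idP/idP => H.
  apply/eqP; move: H; rewrite -?subn1 /subn /= in h2 h3 *.
  repeat (case: eqP => ?); repeat (case: ssrnat.leP => ?); simpl; (done || lia).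
move/eqP: H => H; subst y. by rewrite eqxx /= h3'.
Qed.

Lemma lower (R : realType) n a b c d : (3 <= n)%N -> a != 0 ->
  (n - 2 <= \rank (@univ_adj_mx R n.+1 (@Pprime_rel n) a b c d))%N.
Proof.
move=> hn ha.
set U := univ_adj_mx _ _ _ _ _.
pose M0 : 'M[R]_n.+1 := a *: adj_mx R (@Pprime_rel n) + b *: 1%:M + d *: deg_mx R (@Pprime_rel n).
have eU : U = M0 + c *: J_mx R n.+1 by rewrite /U /univ_adj_mx /M0 addrAC.
have eM : M0 = U + (- c) *: J_mx R n.+1 by rewrite eU scaleNr addrK.
have hM0 : (\rank M0 <= \rank U + 1)%N.
  rewrite eM; apply: leq_trans (mxrank_add _ _) _; rewrite leq_add2l; exact: rankJ.
pose T : 'M[R]_n.-1 := \matrix_(i < n.-1, j < n.-1) M0 (inord i) (inord j.+1).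
have hT : (\rank T <= \rank M0)%N.
  have -> : T = colsub (fun j : 'I_n.-1 => (inord j.+1 : 'I_n.+1)) (rowsub (fun i : 'I_n.-1 => (inord i : 'I_n.+1)) M0).
    by apply/matrixP => i j; rewrite !mxE.
  exact: leq_trans (rank_colsub _ _) (mxrankS (rowsub_sub _ _)).
have Tent : forall i j : 'I_n.-1, (i <= j)%N -> T i j = a * (i == j)%:R.
  move=> i j hij; rewrite !mxE.
  have hi : (i < n.+1)%N by rewrite (leq_trans (ltn_ord i)) // (leq_trans (leq_pred n)).
  have hj : (j.+1 < n.+1)%N by rewrite ltnS (leq_trans (ltn_ord j)) // leq_pred.
  rewrite /Pprime_rel !inordK //.
  have hne : (inord i == inord j.+1 :> 'I_n.+1) = false.
    apply/negbTE/eqP => /(congr1 (@nat_of_ord _)); rewrite !inordK // => e.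
    by move: hij; rewrite e ltnn.
  rewrite hne mulr0 mulr0n mulr0 !addr0; congr (a * _%:R).
  have := Tbool hn hij (ltn_ord i) (ltn_ord j). move=> ->. done.
have Tu : T \in unitmx.
  rewrite unitmxE unitfE det_trig; last first.
    apply/is_trig_mxP => i j hij; rewrite (Tent i j (ltnW hij)).
    rewrite (_ : (i == j) = false) ?mulr0 //.
    by apply/negbTE/eqP => h; rewrite h ltnn in hij.
  rewrite prodf_seq_neq0; apply/allP => i _ /=.
  by rewrite (Tent i i (leqnn _)) eqxx mulr1.
exact: arith hn (mxrank_unit Tu) hT hM0.
Qed.

Ltac nlia := repeat match goal with H : is_true (leq _ _) |- _ => apply (elimT ssrnat.leP) in H; rewrite -?plusE -?minusE -?multE in H end;
  try apply/ssrnat.leP; rewrite -?plusE -?minusE -?multE; lia.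

Lemma pick1 (R : pzRingType) N (F : nat -> R) (t : nat) : (t < N)%N ->
  \sum_(k < N) (k == t :> nat)%:R * F k = F t.
Proof.
move=> ht.
rewrite (bigD1 (Ordinal ht)) //= eqxx /= mul1r big1 ?addr0 // => k hk.
rewrite (_ : (k == t :> nat) = false) ?mul0r //.
apply/negbTE; apply: contra hk => /eqP h; apply/eqP; apply: val_inj; exact h.
Qed.

Lemma NSe (R : pzRingType) n (F : nat -> R) (j : 'I_n.+1) :
  \sum_(k < n.+1) (@Pprime_rel n k j)%:R * F k = \sum_(k < n.+1) (eb n k j : nat)%:R * F k.
Proof. by []. Qed.

Lemma NS0 (R : pzRingType) n (F : nat -> R) (j : 'I_n.+1) : (3 <= n)%N -> (j : nat) = 0%N ->
  \sum_(k < n.+1) (@Pprime_rel n k j)%:R * F k = F 1%N.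
Proof.
move=> hn hj; rewrite NSe hj.
under eq_bigr => k _ do rewrite e_0 //.
by rewrite pick1 // ltnS (leq_trans _ hn).
Qed.

Lemma NSi (R : pzRingType) n (F : nat -> R) (j : 'I_n.+1) : (3 <= n)%N -> (1 <= j)%N -> (j + 3 <= n)%N ->
  \sum_(k < n.+1) (@Pprime_rel n k j)%:R * F k = F j.-1 + F j.+1.
Proof.
move=> hn h1 h2; rewrite NSe.
under eq_bigr => k _ do rewrite e_int // natrD mulrDl.
rewrite big_split /= !pick1 //.
all: nlia.
Qed.

Lemma NSm2 (R : pzRingType) n (F : nat -> R) (j : 'I_n.+1) : (3 <= n)%N -> (j : nat) = (n - 2)%N ->
  \sum_(k < n.+1) (@Pprime_rel n k j)%:R * F k = F (n - 3)%N + F n.-1 + F n.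
Proof.
move=> hn hj; rewrite NSe hj.
under eq_bigr => k _ do rewrite e_m2 // !natrD !mulrDl.
rewrite !big_split /= !pick1 //.
- by rewrite ltnS (leq_trans (leq_pred _)).
- by rewrite ltnS leq_subr.
Qed.

Lemma NSm1 (R : pzRingType) n (F : nat -> R) (j : 'I_n.+1) : (3 <= n)%N -> (j : nat) = n.-1 ->
  \sum_(k < n.+1) (@Pprime_rel n k j)%:R * F k = F (n - 2)%N.
Proof.
move=> hn hj; rewrite NSe hj.
under eq_bigr => k _ do rewrite e_m1 //.
by rewrite pick1 // ltnS leq_subr.
Qed.

Lemma NSn (R : pzRingType) n (F : nat -> R) (j : 'I_n.+1) : (3 <= n)%N -> (j : nat) = n ->
  \sum_(k < n.+1) (@Pprime_rel n k j)%:R * F k = F (n - 2)%N.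
Proof.
move=> hn hj; rewrite NSe hj.
under eq_bigr => k _ do rewrite e_n //.
by rewrite pick1 // ltnS leq_subr.
Qed.

Lemma jcases n (j : 'I_n.+1) : (3 <= n)%N ->
  (j : nat) = 0%N \/ ((1 <= j)%N /\ (j + 3 <= n)%N) \/ (j : nat) = (n - 2)%N \/ (j : nat) = n.-1 \/ (j : nat) = n.
Proof.
move=> hn; have := ltn_ord j; move: (nat_of_ord j) => x hx.
move/ssrnat.leP: hn => hn; move/ssrnat.leP: hx => hx.
have : (x = 0 \/ (1 <= x /\ x + 3 <= n) \/ x = n - 2 \/ x = n.-1 \/ x = n)%coq_nat.
  rewrite /subn /=; lia.
case=> [->|[[/ssrnat.leP h1 /ssrnat.leP h2]|[->|[->|->]]]]; [by left | | by do 2 right; left | by do 3 right; left | by do 4 right].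
by right; left; split; rewrite // -plusE.
Qed.


Lemma per4 (R : pzRingType) (g : nat -> R) i (x : R) : g 0%N + g 2%N = x -> g 1%N + g 3%N = x ->
  g (i %% 4)%N + g (i.+2 %% 4)%N = x.
Proof.
move=> h0 h1.
rewrite -(addn2 i) -modnDml.
have := ltn_mod i 4. case: (i %% 4)%N => [|[|[|[|r]]]] //= _.
by rewrite addrC.
by rewrite addrC.
Qed.

Lemma sum_per4 (R : comNzRingType) (g : nat -> R) q :
  \sum_(k < 4 * q) g (k %% 4)%N = q%:R * (g 0%N + g 1%N + g 2%N + g 3%N).
Proof.
rewrite -(big_mkord xpredT (fun k => g (k %% 4)%N)).
elim: q => [|q IH]; first by rewrite muln0 big_geq // mul0r.
have -> : (4 * q.+1 = (4 * q).+3.+1)%N by rewrite mulnS add4n.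
rewrite !big_nat_recr // IH.
have hm : forall r, ((4 * q + r) %% 4 = r %% 4)%N by move=> r; rewrite mulnC modnMDl.
rewrite -(addn3 (4*q)) -(addn2 (4*q)) -(addn1 (4*q)) !hm modnMr /=.
rewrite -[q.+1]addn1 natrD; ring.
Qed.

Ltac bfalse := repeat (rewrite (_ : (_ == _ :> nat) = false); last by apply/negbTE/eqP; nlia).

Lemma pick1c (R : pzRingType) N (t : nat) : (t < N)%N ->
  \sum_(k < N) ((k == t :> nat)%:R : R) = 1.
Proof.
move=> ht; rewrite -[RHS](pick1 (fun _ => (1 : R)) ht).
by apply: eq_bigr => k _; rewrite mulr1.
Qed.


Lemma upper_b (R : realType) n q : (3 <= n)%N -> n.+1 = (4 * q)%N ->
  exists a b c d : R, a != 0 /\ (\rank (@univ_adj_mx R n.+1 (@Pprime_rel n) a b c d) <= n - 2)%N.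
Proof.
move=> hn hq.
case: q hq => [|q'] hq; first by rewrite muln0 in hq.
have hn' : n = (4 * q' + 3)%N by apply/eqP; rewrite -eqSS hq mulnS add4n addn3.
have m0 : ((n - 3) %% 4 = 0)%N by rewrite (_ : (n - 3 = 4 * q' + 0)%N) 1?mulnC ?modnMDl //; rewrite hn'; nlia.
have m1 : ((n - 2) %% 4 = 1)%N by rewrite (_ : (n - 2 = 4 * q' + 1)%N) 1?mulnC ?modnMDl //; rewrite hn'; nlia.
have m2 : (n.-1 %% 4 = 2)%N by rewrite (_ : (n.-1 = 4 * q' + 2)%N) 1?mulnC ?modnMDl //; rewrite hn'; nlia.
have m3 : (n %% 4 = 3)%N by rewrite {1}hn' mulnC modnMDl.
pose g1 : nat -> R := fun r => match r with 0%N => 1 | 2%N => -1 | _ => 0 end.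
pose g2 : nat -> R := fun r => match r with 1%N => 1 | 2%N => 1 | _ => 0 end.
pose G1 := fun j : nat => g1 (j %% 4)%N.
pose G2 := fun j : nat => g2 (j %% 4)%N.
pose G3 := fun j : nat => ((j == n.-1)%:R - (j == n)%:R : R).
have S1 : \sum_(k < n.+1) G1 k = 0 by rewrite hq sum_per4 /=; ring.
have S2 : \sum_(k < n.+1) G2 k = (2 * q'.+1)%:R by rewrite hq sum_per4 /= natrM; ring.
have S3 : \sum_(k < n.+1) G3 k = 0 by rewrite sumrB !pick1c ?subrr // ltnS leq_pred.
have NS1 : forall j : 'I_n.+1, \sum_(k < n.+1) (@Pprime_rel n k j)%:R * G1 k = 0.
  move=> j; case: (jcases j hn) => [h|[[h1 h2]|[h|[h|h]]]].
  - by rewrite NS0.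
  - have e : (j.+1 = (j.-1).+2)%N by rewrite prednK.
    rewrite NSi // e /G1; apply: per4; rewrite /g1 /=; ring.
  - by rewrite NSm2 // /G1 m0 m2 m3 /=; ring.
  - by rewrite NSm1 // /G1 m1.
  - by rewrite NSn // /G1 m1.
have NS2 : forall j : 'I_n.+1, \sum_(k < n.+1) (@Pprime_rel n k j)%:R * G2 k = 1.
  move=> j; case: (jcases j hn) => [h|[[h1 h2]|[h|[h|h]]]].
  - by rewrite NS0.
  - have e : (j.+1 = (j.-1).+2)%N by rewrite prednK.
    rewrite NSi // e /G2; apply: per4; rewrite /g2 /=; ring.
  - by rewrite NSm2 // /G2 m0 m2 m3 /=; ring.
  - by rewrite NSm1 // /G2 m1.
  - by rewrite NSn // /G2 m1.
have NS3 : forall j : 'I_n.+1, \sum_(k < n.+1) (@Pprime_rel n k j)%:R * G3 k = 0.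
  move=> j; case: (jcases j hn) => [h|[[h1 h2]|[h|[h|h]]]].
  - rewrite NS0 // /G3; bfalse; ring.
  - rewrite NSi // /G3; bfalse; ring.
  - rewrite NSm2 // /G3 !eqxx; bfalse; ring.
  - rewrite NSm1 // /G3; bfalse; ring.
  - rewrite NSn // /G3; bfalse; ring.
exists (2 * q'.+1)%:R, 0, (-1), 0; split; first by rewrite pnatr_eq0 muln_eq0.
have -> : (n - 2 = n.+1 - 3)%N by nlia.
have h1n : (1 < n.+1)%N by nlia.
apply: (@rank_le3 R n.+1 _ G1 G2 G3 ord0 (inord 1) ord_max).
- by move=> j; rewrite row_univ NS1 S1; ring.
- by move=> j; rewrite row_univ NS2 S2; ring.
- by move=> j; rewrite row_univ NS3 S3; ring.
- by rewrite /G1 /= oner_neq0.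
- by rewrite /G2 inordK //= oner_neq0.
- by rewrite /G3 /= eqxx; bfalse; rewrite sub0r oppr_eq0 oner_neq0.
- by rewrite /G1 inordK.
- by rewrite /G1 /= m3.
- by rewrite /G2 /= m3.
Qed.


Lemma per3 (R : comNzRingType) (g : nat -> R) i : (0 < i)%N ->
  g (i.-1 %% 3)%N + g (i.+1 %% 3)%N + g (i %% 3)%N = g 0%N + g 1%N + g 2%N.
Proof.
case: i => [|i] // _ /=.
rewrite -(addn2 i) -(addn1 i) -modnDml -(modnDml i 1).
have := ltn_mod i 3. case: (i %% 3)%N => [|[|[|r]]] //= _; ring.
Qed.

Lemma sum_per3 (R : comNzRingType) (g : nat -> R) q :
  \sum_(k < 3 * q) g (k %% 3)%N = q%:R * (g 0%N + g 1%N + g 2%N).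
Proof.
rewrite -(big_mkord xpredT (fun k => g (k %% 3)%N)).
elim: q => [|q IH]; first by rewrite muln0 big_geq // mul0r.
have -> : (3 * q.+1 = (3 * q).+2.+1)%N by rewrite mulnS add3n.
rewrite !big_nat_recr // IH.
have hm : forall r, ((3 * q + r) %% 3 = r %% 3)%N by move=> r; rewrite mulnC modnMDl.
rewrite -(addn2 (3*q)) -(addn1 (3*q)) !hm modnMr /=.
rewrite -[q.+1]addn1 natrD; ring.
Qed.


Lemma upper_a (R : realType) n p : (6 <= n)%N -> n = (3 * p)%N ->
  exists a b c d : R, a != 0 /\ (\rank (@univ_adj_mx R n.+1 (@Pprime_rel n) a b c d) <= n - 2)%N.
Proof.
move=> h6 hp.
have hn : (3 <= n)%N by apply: leq_trans h6.
case: p hp => [|[|p']] hp; [by rewrite hp in h6 | by rewrite hp in h6 |].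
have m0 : ((n - 3) %% 3 = 0)%N by rewrite (_ : (n - 3 = 3 * p'.+1 + 0)%N) 1?mulnC ?modnMDl //; rewrite hp; nlia.
have m1 : ((n - 2) %% 3 = 1)%N by rewrite (_ : (n - 2 = 3 * p'.+1 + 1)%N) 1?mulnC ?modnMDl //; rewrite hp; nlia.
have m2 : (n.-1 %% 3 = 2)%N by rewrite (_ : (n.-1 = 3 * p'.+1 + 2)%N) 1?mulnC ?modnMDl //; rewrite hp; nlia.
have m3 : (n %% 3 = 0)%N by rewrite hp modnMr.
pose h1 : nat -> R := fun r => match r with 0%N => 1 | 2%N => -1 | _ => 0 end.
pose h2 : nat -> R := fun r => match r with 1%N => 1 | _ => 0 end.
pose H1 := fun j : nat => h1 (j %% 3)%N - (j == n)%:R.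
pose H2 := fun j : nat => h2 (j %% 3)%N - (j == n.-1)%:R.
pose H3 := fun j : nat => ((j == n.-1)%:R - (j == n)%:R : R).
have Sp : forall g : nat -> R, \sum_(k < n.+1) g (k %% 3)%N = p'.+2%:R * (g 0%N + g 1%N + g 2%N) + g 0%N.
  by move=> g; rewrite big_ord_recr /= hp sum_per3 modnMr.
have hnn : (n < n.+1)%N by [].
have hn1 : (n.-1 < n.+1)%N by rewrite ltnS leq_pred.
have S1 : \sum_(k < n.+1) H1 k = 0 by rewrite sumrB pick1c // Sp /h1 /=; ring.
have S2 : \sum_(k < n.+1) H2 k = p'.+1%:R by rewrite sumrB pick1c // Sp /h2 /=; rewrite -addn1 natrD; ring.
have S3 : \sum_(k < n.+1) H3 k = 0 by rewrite sumrB !pick1c ?subrr.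
pose L (F : nat -> R) (j : 'I_n.+1) := \sum_(k < n.+1) (@Pprime_rel n k j)%:R * F k
   + (\sum_(k < n.+1) (@Pprime_rel n k j)%:R * 1 - 1) * F j.
have L1 : forall j, L H1 j = 0.
  move=> j; rewrite /L; case: (jcases j hn) => [h|[[h1' h2']|[h|[h|h]]]].
  - rewrite NS0 // (NS0 (fun _ => (1 : R))) // h /H1 /h1 /=; bfalse; rewrite ?mulr0n /=; ring.
  - rewrite NSi // (NSi (fun _ => (1 : R))) // /H1; bfalse; rewrite ?mulr0n ?subr0.
    rewrite (_ : (1 + 1 - 1 : R) = 1) ?mul1r; last ring.
    rewrite per3 // /h1 /=; ring.
  - rewrite NSm2 // (NSm2 (fun _ => (1 : R))) // h /H1 ?m0 ?m1 ?m2 ?m3 ?eqxx; bfalse; rewrite /h1 /= ?mulr0n; ring.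
  - rewrite NSm1 // (NSm1 (fun _ => (1 : R))) // h /H1 ?m1 ?m2 ?eqxx; bfalse; rewrite /h1 /= ?mulr0n; ring.
  - rewrite NSn // (NSn (fun _ => (1 : R))) // h /H1 ?m1 ?m3 ?eqxx; bfalse; rewrite /h1 /= ?mulr0n; ring.
have L2 : forall j, L H2 j = 1.
  move=> j; rewrite /L; case: (jcases j hn) => [h|[[h1' h2']|[h|[h|h]]]].
  - rewrite NS0 // (NS0 (fun _ => (1 : R))) // h /H2 /h2 /=; bfalse; rewrite ?mulr0n /=; ring.
  - rewrite NSi // (NSi (fun _ => (1 : R))) // /H2; bfalse; rewrite ?mulr0n ?subr0.
    rewrite (_ : (1 + 1 - 1 : R) = 1) ?mul1r; last ring.
    rewrite per3 // /h2 /=; ring.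
  - rewrite NSm2 // (NSm2 (fun _ => (1 : R))) // h /H2 ?m0 ?m1 ?m2 ?m3 ?eqxx; bfalse; rewrite /h2 /= ?mulr0n; ring.
  - rewrite NSm1 // (NSm1 (fun _ => (1 : R))) // h /H2 ?m1 ?m2 ?eqxx; bfalse; rewrite /h2 /= ?mulr0n; ring.
  - rewrite NSn // (NSn (fun _ => (1 : R))) // h /H2 ?m1 ?m3 ?eqxx; bfalse; rewrite /h2 /= ?mulr0n; ring.
have L3 : forall j, L H3 j = 0.
  move=> j; rewrite /L; case: (jcases j hn) => [h|[[h1' h2']|[h|[h|h]]]].
  - rewrite NS0 // (NS0 (fun _ => (1 : R))) // h /H3; bfalse; rewrite ?mulr0n; ring.
  - rewrite NSi // (NSi (fun _ => (1 : R))) // /H3; bfalse; rewrite ?mulr0n; ring.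
  - rewrite NSm2 // (NSm2 (fun _ => (1 : R))) // h /H3 ?eqxx; bfalse; rewrite ?mulr0n; ring.
  - rewrite NSm1 // (NSm1 (fun _ => (1 : R))) // h /H3 ?eqxx; bfalse; rewrite ?mulr0n; ring.
  - rewrite NSn // (NSn (fun _ => (1 : R))) // h /H3 ?eqxx; bfalse; rewrite ?mulr0n; ring.
pose s := (p'.+1)%:R : R.
have key : forall x y z w : R, s * x + (- s + s * y) * z + (-1) * w = s * (x + (y - 1) * z) - w.
  by move=> *; ring.
exists s, (- s), (-1), s; split; first by rewrite /s pnatr_eq0.
have -> : (n - 2 = n.+1 - 3)%N by nlia.
have h1n : (1 < n.+1)%N by nlia.
apply: (@rank_le3 R n.+1 _ H1 H2 H3 ord0 (inord 1) ord_max).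
- move=> j; have E := L1 j; rewrite /L in E; by rewrite row_univ key E S1; ring.
- move=> j; have E := L2 j; rewrite /L in E; by rewrite row_univ key E S2 /s; ring.
- move=> j; have E := L3 j; rewrite /L in E; by rewrite row_univ key E S3; ring.
- by rewrite /H1 /= (_ : (0 == n)%N = false) ?subr0 ?oner_neq0 //; apply/negbTE/eqP; nlia.
- rewrite /H2 inordK //= (_ : (1 == n.-1)%N = false) ?subr0 ?oner_neq0 //; apply/negbTE/eqP; nlia.
- rewrite /H3 /= eqxx (_ : (n == n.-1)%N = false) ?sub0r ?oppr_eq0 ?oner_neq0 //; apply/negbTE/eqP; nlia.
- rewrite /H1 inordK //= (_ : (1 == n)%N = false) ?subr0 //; apply/negbTE/eqP; nlia.
- by rewrite /H1 /= m3 eqxx subrr.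
- rewrite /H2 /= m3 (_ : (n == n.-1)%N = false) ?subr0 //; apply/negbTE/eqP; nlia.
Qed.


Lemma from_upper (R : realType) n : (3 <= n)%N ->
  (exists a b c d : R, a != 0 /\ (\rank (@univ_adj_mx R n.+1 (@Pprime_rel n) a b c d) <= n - 2)%N) ->
  is_mur R (@Pprime_rel n) (n - 2).
Proof.
move=> hn [a [b [c [d [ha hr]]]]]; split.
  exists a, b, c, d; split => //; apply/eqP; rewrite eqn_leq hr /=; exact: lower.
by move=> a' b' c' d' ha'; exact: lower.
Qed.

Local Close Scope ring_scope.

Theorem proposition27 (R : realType) (n : nat) :
  (3 <= n)%N ->
  ((n %% 3 == 0)%N -> is_mur R (@Pprime_rel n) (n - 2)) /\
  ((6 <= n)%N -> (exists k : nat, n.+1 = 4 * k)%N -> is_mur R (@Pprime_rel n) (n - 2)).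
Proof.
move=> hn; split.
  move=> hm; apply: from_upper => //.
  have [h6|hlt] := leqP 6 n.
    apply: (@upper_a R n (n %/ 3) h6).
    by rewrite mulnC divnK.
  move: hn hlt hm; case: n => [|[|[|[|[|[|n]]]]]] //= _ _ _.
  exact: (@upper_b R 3 1 (isT : (3 <= 3)%N) erefl).
move=> h6 [k hk]; apply: from_upper => //; exact: (@upper_b R n k hn hk).
Qed.
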